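(* Let $X\in\mathbb{R}^{n\times d}$ with $n\ge2$, $y\in\mathbb{R}^n$, and let $g:\mathbb{R}^d\to(-\infty,\infty]$ be a proper lower semicontinuous convex function with $g(k\beta)=kg(\beta)$ for all $k\ge0$, $\beta\in\mathbb{R}^d$, such that there exists $\beta\in\mathrm{relint}(\mathrm{dom}(g))$ and $\frac12\|y-X\beta\|_2^2+g(\beta)$ attains its infimum. Let $D(\theta)=-\frac12\|\theta\|_2^2+y^\top\theta-g^\star(X^\top\theta)$. Let $\tilde\beta\in\mathbb{R}^d$ with $X\tilde\beta\ne0$ and $\tilde\theta\in\mathrm{dom}(D)$, and let \[ \mathcal{R}^{\mathrm{DS}}(\tilde\beta,\tilde\theta)=\Big\{\theta\ \Big|\ \Big\|\theta-\tfrac12(\tilde\theta+y)\Big\|_2^2\le\tfrac14\|\tilde\theta-y\|_2^2\ \land\ 0\le g(\tilde\beta)-\theta^\top X\tilde\beta\Big\}. \] Define \[ \alpha=\max\Big(0,\frac{1}{\|X\tilde\beta\|_2^2}\Big(\tfrac12(\tilde\theta+y)^\top X\tilde\beta-g(\tilde\beta)\Big)\Big),\quad \theta_c=\tfrac12(\tilde\theta+y)-\alpha X\tilde\beta,\quad r^2=\tfrac14\|\tilde\theta-y\|_2^2-\alpha^2\|X\tilde\beta\|_2^2. \] Then the minimum-radius Euclidean ball containing $\mathcal{R}^{\mathrm{DS}}(\tilde\beta,\tilde\theta)$ is $\mathcal{R}^{\mathrm{DE}}(\tilde\beta,\tilde\theta)=\{\theta\mid\|\theta-\theta_c\|_2^2\le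 r^2\}$.
   Context: $g^\star(v)=\sup_\beta v^\top\beta-g(\beta)$ is the Fenchel conjugate; $\mathrm{dom}(h)=\{z:|h(z)|<\infty\}$; $\mathrm{relint}$ is relative interior. *)

(* Defs.v *)
From HB Require Import structures.
From mathcomp Require Import all_boot all_order all_algebra.
From mathcomp Require Import all_classical all_reals ereal.
Set Implicit Arguments. Unset Strict Implicit. Unset Printing Implicit Defensive.
Import Order.TTheory GRing.Theory Num.Theory.
Local Open Scope ring_scope.
Local Open Scope classical_set_scope.

Definition dotv {R : realType} {m : nat} (u v : 'cV[R]_m) : R :=
  \sum_(i < m) u i 0 * v i 0.

Definition nrm2 {R : realType} {m : nat} (u : 'cV[R]_m) : R := dotv u u.
Definition enorm {R : realType} {m : nat} (u : 'cV[R]_m) : R := Num.sqrt (nrm2 u).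

Definition eball {R : realType} {m : nat} (c : 'cV[R]_m) (rho : R) : set 'cV[R]_m :=
  [set th | enorm (th - c) <= rho].

(* B(c, rho) is THE minimum-radius Euclidean ball containing S:
   it contains S, every ball containing S has radius >= rho, and any
   containing ball of radius <= rho is this very ball (same center). *)
Definition min_enclosing_ball {R : realType} {m : nat}
  (S : set 'cV[R]_m) (c : 'cV[R]_m) (rho : R) : Prop :=
  0 <= rho /\ S `<=` eball c rho /\
  (forall c' rho', S `<=` eball c' rho' -> rho <= rho' /\ (rho' <= rho -> c' = c)).

Definition proper_fun {R : realType} {d : nat} (g : 'cV[R]_d -> \bar R) : Prop :=
  (forall b, g b != -oo%E) /\ (exists b, g b != +oo%E).

Definition convex_fun {R : realType} {d : nat} (g : 'cV[R]_d -> \bar R) : Prop :=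
  forall (a b : 'cV[R]_d) (t : R), 0 <= t <= 1 ->
    (g (t *: a + (1 - t) *: b)%R <= t%:E * g a + (1 - t)%:E * g b)%E.

Definition lsc_fun {R : realType} {d : nat} (g : 'cV[R]_d -> \bar R) : Prop :=
  forall (x : 'cV[R]_d) (a : R), (a%:E < g x)%E ->
    exists2 e : R, 0 < e & forall z, enorm (z - x) < e -> (a%:E < g z)%E.

Definition edom {R : realType} {d : nat} (g : 'cV[R]_d -> \bar R) : set 'cV[R]_d :=
  [set b | g b \is a fin_num].

Definition aff_hull {R : realType} {d : nat} (S : set 'cV[R]_d) : set 'cV[R]_d :=
  [set x | exists (k : nat) (l : 'I_k -> R) (s : 'I_k -> 'cV[R]_d),
     (forall i, S (s i)) /\ \sum_(i < k) l i = 1 /\ x = \sum_(i < k) l i *: s i].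

Definition relint {R : realType} {d : nat} (S : set 'cV[R]_d) : set 'cV[R]_d :=
  [set x | S x /\ exists2 e : R, 0 < e &
     forall z, aff_hull S z -> enorm (z - x) < e -> S z].

Definition fenchel {R : realType} {d : nat} (g : 'cV[R]_d -> \bar R) (v : 'cV[R]_d) : \bar R :=
  ereal_sup [set ((dotv v b)%:E - g b)%E | b in [set: 'cV[R]_d]].

Definition dualD {R : realType} {n d : nat} (X : 'M[R]_(n, d)) (y : 'cV[R]_n)
  (g : 'cV[R]_d -> \bar R) (th : 'cV[R]_n) : \bar R :=
  ((- (2^-1 * nrm2 th) + dotv y th)%:E - fenchel g (X^T *m th))%E.

Definition RDS {R : realType} {n d : nat} (X : 'M[R]_(n, d)) (y : 'cV[R]_n)
  (g : 'cV[R]_d -> \bar R) (bt : 'cV[R]_d) (tt : 'cV[R]_n) : set 'cV[R]_n :=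
  [set th | nrm2 (th - 2^-1 *: (tt + y)) <= 4^-1 * nrm2 (tt - y) /\
            (0 <= g bt - (dotv th (X *m bt))%:E)%E].

(* alpha = max(0, (1/2 (tt+y)^T X bt - g(bt)) / |X bt|^2), computed in \bar R
   (if g bt = +oo this gives max(0,-oo) = 0) *)
Definition alphaDE {R : realType} {n d : nat} (X : 'M[R]_(n, d)) (y : 'cV[R]_n)
  (g : 'cV[R]_d -> \bar R) (bt : 'cV[R]_d) (tt : 'cV[R]_n) : R :=
  fine (Order.max 0%E
    (((nrm2 (X *m bt))^-1)%:E * ((dotv (2^-1 *: (tt + y)) (X *m bt))%:E - g bt)))%E.

(* Main.v *)
Require Import Defs.
From HB Require Import structures.
From mathcomp Require Import all_boot all_order all_algebra.
From mathcomp Require Import all_classical all_reals ereal.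
From mathcomp Require Import ring lra.
Import Order.TTheory GRing.Theory Num.Theory.
Local Open Scope ring_scope.
Local Open Scope classical_set_scope.

Section Helpers.
Context {R : realType} {m : nat}.
Implicit Types (u v w : 'cV[R]_m).

Lemma dotvC u v : dotv u v = dotv v u.
Proof. by rewrite /dotv; apply eq_bigr => i _; rewrite mulrC. Qed.

Lemma dotvDl u w v : dotv (u + w) v = dotv u v + dotv w v.
Proof. by rewrite /dotv -big_split; apply eq_bigr => i _ /=; rewrite mxE mulrDl. Qed.

Lemma dotvZl (a : R) u v : dotv (a *: u) v = a * dotv u v.
Proof. by rewrite /dotv mulr_sumr; apply eq_bigr => i _; rewrite mxE mulrA. Qed.

Lemma dotvNl u v : dotv (- u) v = - dotv u v.
Proof. by rewrite -scaleN1r dotvZl mulN1r. Qed.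

Lemma dotvBl u w v : dotv (u - w) v = dotv u v - dotv w v.
Proof. by rewrite dotvDl dotvNl. Qed.

Lemma dotvDr u w v : dotv v (u + w) = dotv v u + dotv v w.
Proof. by rewrite dotvC dotvDl !(dotvC v). Qed.

Lemma dotvZr (a : R) u v : dotv v (a *: u) = a * dotv v u.
Proof. by rewrite dotvC dotvZl dotvC. Qed.

Lemma dotvNr u v : dotv v (- u) = - dotv v u.
Proof. by rewrite dotvC dotvNl dotvC. Qed.

Lemma dotvBr u w v : dotv v (u - w) = dotv v u - dotv v w.
Proof. by rewrite dotvDr dotvNr. Qed.

Lemma nrm2_ge0 u : 0 <= nrm2 u.
Proof. by rewrite /nrm2 /dotv; apply: sumr_ge0 => i _; rewrite -expr2 sqr_ge0. Qed.

Lemma nrm2_eq0 u : nrm2 u = 0 -> u = 0.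
Proof.
move=> h; apply/matrixP => i j; rewrite (ord1 j) mxE.
have hge : forall k : 'I_m, predT k -> 0 <= u k 0 * u k 0.
  by move=> k _; rewrite -expr2 sqr_ge0.
have /eqP := psumr_eq0P hge h (i := i) isT.
by rewrite mulf_eq0 orbb => /eqP.
Qed.

Lemma nrm2D u w : nrm2 (u + w) = nrm2 u + 2 * dotv u w + nrm2 w.
Proof. rewrite /nrm2 dotvDl !dotvDr (dotvC w u); ring. Qed.

Lemma nrm2N u : nrm2 (- u) = nrm2 u.
Proof. by rewrite /nrm2 dotvNl dotvNr opprK. Qed.

Lemma nrm2Z (a : R) u : nrm2 (a *: u) = a ^+ 2 * nrm2 u.
Proof. by rewrite /nrm2 dotvZl dotvZr mulrA expr2. Qed.

Lemma dotv_mx u v : dotv u v = (u^T *m v) 0 0.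
Proof. by rewrite /dotv mxE; apply eq_bigr => i _; rewrite mxE. Qed.

End Helpers.

Lemma dotv_tr (R : realType) (n d : nat) (A : 'M[R]_(n, d)) (u : 'cV[R]_n) (w : 'cV[R]_d) :
  dotv (A^T *m u) w = dotv u (A *m w).
Proof. by rewrite !dotv_mx trmx_mul trmxK mulmxA. Qed.

Theorem theorem11 (R : realType) (n d : nat) (X : 'M[R]_(n, d)) (y : 'cV[R]_n)
  (g : 'cV[R]_d -> \bar R) (bt : 'cV[R]_d) (tt : 'cV[R]_n) :
  (2 <= n)%N ->
  proper_fun g -> lsc_fun g -> convex_fun g ->
  (forall (k : R) (b : 'cV[R]_d), 0 <= k -> g (k *: b) = (k%:E * g b)%E) ->
  (exists b, relint (edom g) b) ->
  (exists b0, forall b,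
     ((2^-1 * nrm2 (y - X *m b0))%:E + g b0 <= (2^-1 * nrm2 (y - X *m b))%:E + g b)%E) ->
  X *m bt != 0 ->
  dualD X y g tt \is a fin_num ->
  let alpha := alphaDE X y g bt tt in
  let thc := 2^-1 *: (tt + y) - alpha *: (X *m bt) in
  let r2 := 4^-1 * nrm2 (tt - y) - alpha ^+ 2 * nrm2 (X *m bt) in
  exists rho : R, min_enclosing_ball (RDS X y g bt tt) thc rho /\
    eball thc rho = [set th | nrm2 (th - thc) <= r2].
Proof.
move=> hn [gnoo _] _ _ ghom _ _ Hv HD alpha thc r2.
have Hnv : 0 < nrm2 (X *m bt).
  rewrite lt_def nrm2_ge0 andbT; apply/eqP => /nrm2_eq0 h; by rewrite h eqxx in Hv.
have Htt : RDS X y g bt tt tt.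
  split.
    have -> : tt - 2^-1 *: (tt + y) = 2^-1 *: (tt - y).
      by apply/matrixP => i j; rewrite !mxE; lra.
    rewrite nrm2Z; have -> : (2^-1 : R) ^+ 2 = 4^-1 by lra.
    by [].
  case Hg: (g bt) => [g0| |]; last by have := gnoo bt; rewrite Hg.
    2: by rewrite /= leey.
  move: HD; rewrite /dualD fin_numB => /andP[_ Hf].
  set F := fenchel g (X^T *m tt) in Hf.
  have ub : forall b, ((dotv (X^T *m tt) b)%:E - g b <= F)%E.
    by move=> b; apply: ereal_sup_ubound; exists b.
  have HF : F = (fine F)%:E by rewrite fineK.
  set f := fine F in HF.
  rewrite -EFinB lee_fin subr_ge0 leNgt; apply/negP => Hlt.
  set p := dotv tt (X *m bt) in Hlt.
  have hpg : 0 < p - g0 by rewrite subr_gt0.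
  set k := (`|f| + 1) / (p - g0).
  have hk : 0 < k by rewrite divr_gt0 // ltr_pwDr // normr_ge0.
  have := ub (k *: bt); rewrite (ghom _ _ (ltW hk)) Hg HF dotvZr dotv_tr -/p.
  rewrite -EFinM -EFinB lee_fin.
  have -> : k * p - k * g0 = `|f| + 1.
    by rewrite -mulrBr /k divfK // subr_eq0 gt_eqF.
  have := ler_norm f; lra.
set v := X *m bt.
set c0 := 2^-1 *: (tt + y).
have [Ha0 [HH HP]] : 0 <= alpha /\
   (forall th, (0 <= g bt - (dotv th v)%:E)%E ->
      alpha * dotv th v <= alpha * dotv c0 v - alpha ^+ 2 * nrm2 v) /\
   (0 <= g bt - (dotv c0 v - alpha * nrm2 v)%:E)%E.
  case Hg: (g bt) => [g0| |]; last by have := gnoo bt; rewrite Hg.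
    set q := (nrm2 v)^-1 * (dotv c0 v - g0).
    have Ha : alpha = Num.max 0 q.
      rewrite /alpha /alphaDE -/v -/c0 Hg -EFinB -EFinM.
      by rewrite -EFin_max.
    have Hq : nrm2 v * q = dotv c0 v - g0 by rewrite /q mulrA mulfV ?mul1r // gt_eqF.
    rewrite Ha; case: (leP q 0) => hq.
      split => //; split.
        by move=> th _; lra.
      rewrite mul0r subr0 -EFinB lee_fin subr_ge0.
      nra.
    split; first exact: ltW.
    split.
      move=> th; rewrite -EFinB lee_fin subr_ge0 => h. nra.
    rewrite -EFinB lee_fin subr_ge0. nra.
  have Ha : alpha = 0.
    rewrite /alpha /alphaDE -/v -/c0 Hg /=.
    by rewrite gt0_muleNy ?lte_fin ?invr_gt0 // max_l ?leNye.
  rewrite Ha; split => //; split; last by rewrite /= leey.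
  by move=> th _; lra.
have Hin : forall th, RDS X y g bt tt th -> nrm2 (th - thc) <= r2.
  move=> th [h1 h2].
  have -> : th - thc = (th - c0) + alpha *: v by rewrite /thc opprD opprK addrA.
  rewrite nrm2D dotvZr dotvBl nrm2Z /r2.
  have := HH th h2; nra.
have Hr2 : 0 <= r2 by have := Hin tt Htt; have := nrm2_ge0 (tt - thc); lra.
have [w [Hw0 Hwv]] : exists w : 'cV[R]_n, 0 < nrm2 w /\ dotv w v = 0.
  case: (pickP (fun i => v i 0 != 0)) => [i Hi|H0]; last first.
    have hv0 : v = 0.
      apply/matrixP => a b; rewrite (ord1 b) [in RHS]mxE.
      by move: (H0 a) => /= /negbFE /eqP.
    by move: Hv; rewrite -/v hv0 eqxx.
  have [j Hj] : exists j : 'I_n, j != i.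
    have h0 : (0 < n)%N by apply: leq_trans hn.
    have h1 : (1 < n)%N by [].
    case: (eqVneq i (Ordinal h0)) => [->|hi]; last by exists (Ordinal h0); rewrite eq_sym.
    by exists (Ordinal h1).
  exists (v j 0 *: delta_mx i 0 - v i 0 *: delta_mx j 0).
  have Hd : forall (k : 'I_n) (u : 'cV[R]_n), dotv (delta_mx k 0) u = u k 0.
    move=> k u; rewrite /dotv (bigD1 k) //= big1 ?addr0.
      by rewrite mxE !eqxx mul1r.
    by move=> l hl; rewrite mxE (negbTE hl) mul0r.
  split; last first.
    by rewrite dotvBl !dotvZl !Hd mulrC subrr.
  rewrite lt_def nrm2_ge0 andbT; apply/eqP => /nrm2_eq0 /matrixP /(_ j 0).
  rewrite !mxE !eqxx (negbTE Hj) /= mulr0 mulr1 sub0r => /eqP.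
  by rewrite oppr_eq0 => h; move: Hi; rewrite /v mxE (eqP h) eqxx.
pose s := Num.sqrt r2 / Num.sqrt (nrm2 w).
pose u := s *: w.
have Hu : nrm2 u = r2.
  rewrite nrm2Z /s exprMn exprVn !sqr_sqrtr ?nrm2_ge0 //.
  by rewrite divfK // gt_eqF.
have Huv : dotv u v = 0 by rewrite dotvZl Hwv mulr0.
have Hthcv : dotv thc v = dotv c0 v - alpha * nrm2 v by rewrite /thc dotvBl dotvZl.
have HS : forall e : R, e ^+ 2 = 1 -> RDS X y g bt tt (thc + e *: u).
  move=> e he; split.
    have -> : thc + e *: u - c0 = e *: u + (- alpha) *: v.
      by apply/matrixP => a b; rewrite /thc !mxE; ring.
    rewrite (nrm2D (e *: u)) (nrm2Z e u) (nrm2Z (- alpha) v) dotvZl dotvZr Huv Hu he /r2; lra.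
  by rewrite dotvDl dotvZl Huv mulr0 addr0 Hthcv.
have Hp := HS 1 (expr1n _ _).
have Hm := HS (-1) ltac:(by rewrite sqrrN expr1n).
exists (Num.sqrt r2); split; last first.
  apply/seteqP; split => th /=; by rewrite /eball /= /enorm ler_sqrt.
split; first exact: sqrtr_ge0.
split.
  by move=> th /Hin h; rewrite /eball /= /enorm ler_wsqrtr.
move=> c' rho' Hsub.
have h1 := Hsub _ Hp; have h2 := Hsub _ Hm.
rewrite /eball /= /enorm in h1 h2.
have hr : 0 <= rho' by apply: le_trans (sqrtr_ge0 _) h1.
have sq : forall x, Num.sqrt x <= rho' -> 0 <= x -> x <= rho' ^+ 2.
  move=> x hx x0; have := sqr_sqrtr x0; have := sqrtr_ge0 x; nra.
have q1 := sq _ h1 (nrm2_ge0 _); have q2 := sq _ h2 (nrm2_ge0 _).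
have e1 : thc + 1 *: u - c' = (thc - c') + u by rewrite scale1r addrAC.
have e2 : thc + -1 *: u - c' = (thc - c') + - u by rewrite scaleN1r addrAC.
move: q1 q2; rewrite e1 e2 (nrm2D (thc - c') u) (nrm2D (thc - c') (- u)).
rewrite dotvNr nrm2N Hu => q1 q2.
have := nrm2_ge0 (thc - c'); have := sqr_sqrtr Hr2; have := sqrtr_ge0 r2.
move=> s0 s2 n0.
split.
  rewrite leNgt; apply/negP => hlt; nra.
move=> hle.
have : nrm2 (thc - c') = 0 by nra.
by move/nrm2_eq0/eqP; rewrite subr_eq0 => /eqP.
Qed.
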